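(* Suppose $|\mathit{Obs}|>1$ and $m\ge2$, and assume also $|\mathit{Obs}|\le m$ so that the class $\mathcal C$ below is nonempty. Let $\mathcal C$ be the class of $m$-agent models in which every observation $o\in\mathit{Obs}$ is the initial observation $\vec o_{\iota,a}$ of at least one agent $a$. Then there is a CTL*KΔ$_m$ formula $\varphi$ such that no CTL*K$_m$ formula $\varphi'$ satisfies: for every $M\in\mathcal C$, $M\models\varphi$ iff $M\models\varphi'$.
   Context: Fix a countably infinite set $\mathit{AP}$ of atomic propositions, a finite nonempty set $\mathit{Obs}$ of observations, and a finite set of agents $\mathit{Ag}=\{a_1,\dots,a_m\}$. For a word $w$ we write $w_i$ for its letter at position $i$ (positions start at $0$), $w_{\le i}$ for its prefix ending at position $i$, $|w|$ for its length (finite words) and $\mathit{last}(w)$ for its last letter; $w\preceq w'$ means $w$ is a prefix of $w'$. Syntax of CTL*KΔ$_m$: history formulas $\varphi::=p\mid\neg\varphi\mid\varphi\wedge\varphi\mid\mathbf A\psi\mid\mathbf K_a\varphi\mid\Delta^{o}_a\varphi$ and path formulas $\psi::=\varphi\mid\neg\psi\mid\psi\wedge\psi\mid\mathbf X\psi\mid\psi\,\mathbf U\,\psi$, with $p\in\mathit{AP}$, $a\in\mathit{Ag}$, $o\in\mathit{Obs}$; formulas are history formulas. CTL*K$_m$ is the fragment of formulas containing no operator $\Delta^o_a$. A multiagent model is $M=(\mathit{AP}_f,S,T,V,\{\sim_o\}_{o\in\mathit{Obs}},s_\iota,\vec o_\iota)$ where $\mathit{AP}_f\subseteq\mathit{AP}$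 is finite, $S$ is a finite set of states, $T\subseteq S\times S$ is left-total, $V:S\to2^{\mathit{AP}_f}$, each $\sim_o$ is an equivalence relation on $S$, $s_\iota\in S$, and $\vec o_\iota=(\vec o_{\iota,a})_{a\in\mathit{Ag}}\in\mathit{Obs}^{\mathit{Ag}}$ gives each agent an initial observation. Paths are infinite sequences of states $s_0s_1\dots$ with $s_iTs_{i+1}$ (starting anywhere); histories are finite nonempty prefixes of paths. An observation record is a finite word over $\mathit{Obs}\times\mathbb N$; $r_{=n}$ is the subword of $r$ consisting of the pairs with second component $n$. A record tuple is $\vec r=(\vec r_a)_{a\in\mathit{Ag}}$; $\vec r\cdot(o,n)_a$ is $\vec r$ with $\vec r_a$ replaced by $\vec r_a\cdot(o,n)$; $\vec\epsilon$ is the tuple of empty records. For agent $a$: $\mathit{ol}_a(\vec r,0)=\vec o_{\iota,a}\cdot o_1\cdots o_k$ if $(\vec r_a)_{=0}=(o_1,0)\cdots(o_k,0)$, and $\mathit{ol}_a(\vec r,n+1)=\mathit{last}(\mathit{ol}_a(\vec r,n))\cdot o_1\cdots o_k$ if $(\vec r_a)_{=n+1}=(o_1,n+1)\cdots(o_k,n+1)$. $h\approx^{\vec r}_a h'$ iff $|h|=|h'|$ and for all $i<|h|$ and all $o$ in $\mathit{ol}_a(\vec r,i)$, $h_i\sim_o h'_i$. Natural semantics: $h,\vec r\models p$ iff $p\in V(\mathit{last}(h))$; negation and conjunction as usual; $h,\vec r\models\mathbf A\psi$ iff for all paths $\pi$ with $h\preceq\pi$, $\pi,|h|-1,\vec r\models\psi$;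 $h,\vec r\models\mathbf K_a\varphi$ iff $h',\vec r\models\varphi$ for all histories $h'\approx^{\vec r}_a h$; $h,\vec r\models\Delta^o_a\varphi$ iff $h,\vec r\cdot(o,|h|-1)_a\models\varphi$; $\pi,n,\vec r\models\varphi$ iff $\pi_{\le n},\vec r\models\varphi$; negation and conjunction as usual; $\pi,n,\vec r\models\mathbf X\psi$ iff $\pi,n+1,\vec r\models\psi$; $\pi,n,\vec r\models\psi_1\mathbf U\psi_2$ iff there is $m'\ge n$ with $\pi,m',\vec r\models\psi_2$ and $\pi,j,\vec r\models\psi_1$ for all $n\le j<m'$. $M\models\varphi$ iff $s_\iota,\vec\epsilon\models\varphi$ ($s_\iota$ viewed as a one-state history). *)

(* Defs.v *)
From HB Require Import structures.
From mathcomp Require Import all_boot.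
Unset Printing Implicit Defensive.

Section Syntax.
Variables (Obs : finType) (m : nat).

Inductive hform : Type :=
| HAtom  : nat -> hform
| HNeg   : hform -> hform
| HAnd   : hform -> hform -> hform
| HA     : pform -> hform
| HK     : 'I_m -> hform -> hform
| HDelta : 'I_m -> Obs -> hform -> hform
with pform : Type :=
| PHist  : hform -> pform
| PNeg   : pform -> pform
| PAnd   : pform -> pform -> pform
| PX     : pform -> pform
| PU     : pform -> pform -> pform.

Fixpoint hdelta_free (f : hform) : bool :=
  match f with
  | HAtom _ => true
  | HNeg f1 => hdelta_free f1
  | HAnd f1 f2 => hdelta_free f1 && hdelta_free f2
  | HA p => pdelta_free p
  | HK _ f1 => hdelta_free f1
  | HDelta _ _ _ => false
  end
with pdelta_free (p : pform) : bool :=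
  match p with
  | PHist f => hdelta_free f
  | PNeg p1 => pdelta_free p1
  | PAnd p1 p2 => pdelta_free p1 && pdelta_free p2
  | PX p1 => pdelta_free p1
  | PU p1 p2 => pdelta_free p1 && pdelta_free p2
  end.

End Syntax.
Arguments HAtom {Obs m}. Arguments HNeg {Obs m}. Arguments HAnd {Obs m}. Arguments HA {Obs m}. Arguments HK {Obs m}. Arguments HDelta {Obs m}.
Arguments PHist {Obs m}. Arguments PNeg {Obs m}. Arguments PAnd {Obs m}. Arguments PX {Obs m}. Arguments PU {Obs m}.
Arguments hdelta_free {Obs m}. Arguments pdelta_free {Obs m}.

Record model (Obs : finType) (m : nat) : Type := Model {
  st : finType;
  APf : seq nat;
  trans : rel st;
  val : st -> pred nat;
  sim : Obs -> rel st;
  s_init : st;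
  o_init : 'I_m -> Obs;
  trans_total : forall s, exists s', trans s s';
  val_fin : forall s p, val s p -> p \in APf;
  sim_refl : forall o s, sim o s s;
  sim_sym : forall o s t, sim o s t -> sim o t s;
  sim_trans : forall o s t u, sim o s t -> sim o t u -> sim o s u
}.
Arguments st {Obs m}. Arguments APf {Obs m}. Arguments trans {Obs m}.
Arguments val {Obs m}. Arguments sim {Obs m}. Arguments s_init {Obs m}.
Arguments o_init {Obs m}.

Definition rtuple (Obs : finType) (m : nat) := 'I_m -> seq (Obs * nat).
Definition rt_empty (Obs : finType) (m : nat) : rtuple Obs m := fun _ => [::].
Arguments rt_empty {Obs m}.

Definition rt_add (Obs : finType) (m : nat) (r : rtuple Obs m) (a : 'I_m)
  (o : Obs) (n : nat) : rtuple Obs m :=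
  fun b => if b == a then rcons (r b) (o, n) else r b.
Arguments rt_add {Obs m}.


Section Semantics.
Variables (Obs : finType) (m : nat) (M : model Obs m).
Local Notation S := (st M).

Definition obs_at (r : rtuple Obs m) (a : 'I_m) (n : nat) : seq Obs :=
  [seq x.1 | x <- r a & x.2 == n].

Fixpoint ol (r : rtuple Obs m) (a : 'I_m) (n : nat) : seq Obs :=
  match n with
  | 0 => o_init M a :: obs_at r a 0
  | n'.+1 => last (o_init M a) (ol r a n') :: obs_at r a n'.+1
  end.

Definition is_hist (h : seq S) : bool :=
  if h is x :: t then path (trans M) x t else false.

Definition is_path (pi : nat -> S) : Prop := forall i, trans M (pi i) (pi i.+1).

Definition hist_prefix (h : seq S) (pi : nat -> S) : Prop :=
  forall i, i < size h -> nth (s_init M) h i = pi i.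

Definition approx (r : rtuple Obs m) (a : 'I_m) (h h' : seq S) : Prop :=
  size h = size h' /\
  forall i, i < size h -> forall o, o \in ol r a i ->
    sim M o (nth (s_init M) h i) (nth (s_init M) h' i).

Fixpoint hsat (h : seq S) (r : rtuple Obs m) (f : hform Obs m) {struct f} : Prop :=
  match f with
  | HAtom p => val M (last (s_init M) h) p
  | HNeg f1 => ~ hsat h r f1
  | HAnd f1 f2 => hsat h r f1 /\ hsat h r f2
  | HA p => forall pi, is_path pi -> hist_prefix h pi -> psat pi (size h).-1 r p
  | HK a f1 => forall h', is_hist h' -> approx r a h' h -> hsat h' r f1
  | HDelta a o f1 => hsat h (rt_add r a o (size h).-1) f1
  end
with psat (pi : nat -> S) (n : nat) (r : rtuple Obs m) (p : pform Obs m) {struct p} : Prop :=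
  match p with
  | PHist f => hsat (mkseq pi n.+1) r f
  | PNeg p1 => ~ psat pi n r p1
  | PAnd p1 p2 => psat pi n r p1 /\ psat pi n r p2
  | PX p1 => psat pi n.+1 r p1
  | PU p1 p2 => exists k, n <= k /\ psat pi k r p2 /\
                  forall j, n <= j -> j < k -> psat pi j r p1
  end.

Definition msat (f : hform Obs m) : Prop := hsat [:: s_init M] rt_empty f.

End Semantics.
Arguments msat {Obs m}.

Definition in_classC (Obs : finType) (m : nat) (M : model Obs m) : Prop :=
  forall o : Obs, exists a : 'I_m, o_init M a = o.
Arguments in_classC {Obs m}.

(* Main.v *)
Require Import Defs.
From mathcomp Require Import all_boot.
From Stdlib Require Import FunctionalExtensionality.

Scheme hform_mut := Induction for hform Sort Prop
  with pform_mut := Induction for pform Sort Prop.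

Definition sim1 (Obs : finType) (o1 o2 : Obs) (o : Obs) : rel (bool * bool) :=
  fun x y => if o == o1 then x.1 == y.1
             else if o == o2 then (x.1 (+) x.2) == (y.1 (+) y.2) else true.
Arguments sim1 {Obs}.

Lemma sim1_refl (Obs : finType) (o1 o2 o : Obs) s : sim1 o1 o2 o s s.
Proof. by rewrite /sim1; case: (o == o1); [|case: (o == o2)]. Qed.
Lemma sim1_sym (Obs : finType) (o1 o2 o : Obs) s t : sim1 o1 o2 o s t -> sim1 o1 o2 o t s.
Proof. by rewrite /sim1; case: (o == o1); [|case: (o == o2)]; rewrite // eq_sym. Qed.
Lemma sim1_trans (Obs : finType) (o1 o2 o : Obs) s t u :
  sim1 o1 o2 o s t -> sim1 o1 o2 o t u -> sim1 o1 o2 o s u.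
Proof.
by rewrite /sim1; case: (o == o1); [|case: (o == o2)] => // /eqP -> /eqP ->.
Qed.

Lemma vf1 (s : bool * bool) p : (p == 0) && ~~ s.2 -> p \in [:: 0].
Proof. by case/andP => /eqP ->. Qed.
Lemma vf2 (s : bool) p : (p == 0) && ~~ s -> p \in [:: 0].
Proof. by case/andP => /eqP ->. Qed.
Lemma tot1 (s : bool * bool) : exists s', s == s'.
Proof. by exists s. Qed.
Lemma tot2 (s : bool) : exists s', s == s'.
Proof. by exists s. Qed.

Definition M1 (Obs : finType) (m : nat) (oi : 'I_m -> Obs) (o1 o2 : Obs)
  : model Obs m :=
  @Model Obs m (bool * bool)%type [:: 0] (fun x y => x == y)
    (fun x p => (p == 0) && ~~ x.2) (sim1 o1 o2) (false, false) oi
    tot1 vf1 (@sim1_refl Obs o1 o2) (@sim1_sym Obs o1 o2) (@sim1_trans Obs o1 o2).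

Definition M2 (Obs : finType) (m : nat) (oi : 'I_m -> Obs) : model Obs m :=
  @Model Obs m bool [:: 0] (fun x y => x == y)
    (fun x p => (p == 0) && ~~ x) (fun _ _ _ => true) false oi
    tot2 vf2 (fun _ _ => erefl) (fun _ _ _ _ => erefl) (fun _ _ _ _ _ _ => erefl).

Arguments M1 {Obs m}. Arguments M2 {Obs m}.
Arguments hsat {Obs m}. Arguments psat {Obs m}. Arguments is_hist {Obs m}.
Arguments is_path {Obs m}. Arguments hist_prefix {Obs m}. Arguments approx {Obs m}.
Arguments ol {Obs m}.

Lemma pathEq (T : eqType) (x : T) t :
  path (fun a b => a == b) x t = (t == nseq (size t) x).
Proof.
elim: t x => [|y t IH] x //=; rewrite IH eqseq_cons eq_sym.
by case: eqP => // ->.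
Qed.

Lemma mkseq_const (T : Type) (c : T) n : mkseq (fun _ => c) n = nseq n c.
Proof.
apply: (@eq_from_nth _ c); rewrite ?size_mkseq ?size_nseq // => i Hi.
by rewrite nth_mkseq // nth_nseq Hi.
Qed.

Lemma path_const (T : eqType) (pi : nat -> T) :
  (forall i, pi i == pi i.+1) -> forall i, pi i = pi 0.
Proof. move=> H; elim=> // i <-; exact/esym/eqP. Qed.

Lemma ol_empty Obs m (M : model Obs m) a i : ol M rt_empty a i = [:: o_init M a].
Proof. by elim: i => //= i ->. Qed.

Lemma back1 (Obs : finType) (o1 o2 o : Obs) (c : bool * bool) (d : bool) :
  exists c', sim1 o1 o2 o c' c && (c'.2 == d).
Proof.
exists (if o == o1 then c.1 else if o == o2 then c.1 (+) c.2 (+) d else c.1, d).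
rewrite /sim1 /= eqxx andbT; case: (o == o1) => //=; case: (o == o2) => //=.
by case: c => [[] []]; case: d.
Qed.

Lemma hist_nseq (T : eqType) (h : seq T) :
  (if h is x :: t then path (fun a b => a == b) x t else false) ->
  exists c n, h = nseq n.+1 c.
Proof.
case: h => [|x t] //; rewrite pathEq => /eqP ->.
by exists x, (size t).
Qed.

Lemma is_hist_nseq (T : eqType) (c : T) n :
  path (fun a b => a == b) c (nseq n c).
Proof. by rewrite pathEq size_nseq. Qed.

Arguments hist_nseq {T h}. Arguments path_const {T pi}.

Lemma inv_all (Obs : finType) (m : nat) (oi : 'I_m -> Obs) (o1 o2 : Obs) :
  forall f : hform Obs m, hdelta_free f ->
  forall h, is_hist (M1 oi o1 o2) h ->
  (hsat (M1 oi o1 o2) h rt_empty f <-> hsat (M2 oi) (map snd h) rt_empty f).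
Proof.
apply (@hform_mut Obs m
  (fun f => hdelta_free f -> forall h, is_hist (M1 oi o1 o2) h ->
    (hsat (M1 oi o1 o2) h rt_empty f <-> hsat (M2 oi) (map snd h) rt_empty f))
  (fun p => pdelta_free p -> forall pi n, is_path (M1 oi o1 o2) pi ->
    (psat (M1 oi o1 o2) pi n rt_empty p <-> psat (M2 oi) (snd \o pi) n rt_empty p))).
- move=> n _ h _ /=.
  by rewrite -[false]/(snd (false, false)) (last_map snd).
- move=> f IH /= Hd h Hh; have := IH Hd h Hh; tauto.
- move=> f1 IH1 f2 IH2 /= /andP [Hd1 Hd2] h Hh.
  have := IH1 Hd1 h Hh; have := IH2 Hd2 h Hh; tauto.
- move=> p IH /= Hd h Hh; rewrite size_map; split.
  + move=> H pi2 Hpi2 Hpre.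
    have [c [n Eh]] := hist_nseq Hh.
    have Hpi1 : is_path (M1 oi o1 o2) (fun _ => c) by move=> i /=.
    have Hpre1 : hist_prefix (M1 oi o1 o2) h (fun _ => c).
      by move=> i; rewrite Eh size_nseq nth_nseq => ->.
    have Heq : snd \o (fun _ : nat => c) = pi2.
      apply: functional_extensionality => i /=.
      rewrite (path_const Hpi2 i) -(Hpre 0); last by rewrite size_map Eh.
      by rewrite Eh /=.
    by rewrite -Heq; apply/(IH Hd _ _ Hpi1); apply: H.
  + move=> H pi Hpi Hpre; apply/(IH Hd pi _ Hpi); apply: H.
    * by move=> i /=; move: (Hpi i) => /= /eqP ->.
    * move=> i; rewrite size_map => Hi /=.
      by rewrite -[false]/(snd (false, false)) (nth_map (false, false)) // Hpre.
- move=> a f IH /= Hd h Hh; split.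
  + move=> H h2 Hh2 [Hs Hap].
    have [c [n Eh]] := hist_nseq Hh.
    have [d [n2 Eh2]] := hist_nseq Hh2.
    have [c' /andP [Hc' /eqP Hd']] := @back1 Obs o1 o2 (oi a) c d.
    have Hh1 : is_hist (M1 oi o1 o2) (nseq n.+1 c') by apply: is_hist_nseq.
    have Hn : n2 = n by move: Hs; rewrite Eh Eh2 size_map !size_nseq => -[].
    have -> : h2 = map snd (nseq n.+1 c') by rewrite map_nseq Hd' Eh2 Hn.
    apply/(IH Hd _ Hh1); apply: H => //; split; first by rewrite Eh !size_nseq.
    move=> i; rewrite size_nseq => Hi o; rewrite ol_empty inE => /eqP ->.
    by rewrite Eh !nth_nseq Hi.
  + move=> H h1 Hh1 [Hs Hap]; apply/(IH Hd h1 Hh1); apply: H.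
    * have [c [n Eh]] := hist_nseq Hh1; rewrite Eh map_nseq; exact: is_hist_nseq.
    * by split => //; rewrite !size_map.
- by [].
- move=> f IH /= Hd pi n Hpi.
  have Hh : is_hist (M1 oi o1 o2) (mkseq pi n.+1).
    have Hc := path_const Hpi.
    rewrite (eq_mkseq (g := fun _ => pi 0)) // mkseq_const; exact: is_hist_nseq.
  by move: (IH Hd _ Hh); rewrite /mkseq -map_comp.
- move=> p IH /= Hd pi n Hpi; have := IH Hd pi n Hpi; tauto.
- move=> p1 IH1 p2 IH2 /= /andP [Hd1 Hd2] pi n Hpi.
  have := IH1 Hd1 pi n Hpi; have := IH2 Hd2 pi n Hpi; tauto.
- move=> p IH /= Hd pi n Hpi; exact: IH.
- move=> p1 IH1 p2 IH2 /= /andP [Hd1 Hd2] pi n Hpi; split.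
  + move=> [k [Hk [H2 H1]]]; exists k; split=> //; split.
      by apply/(IH2 Hd2).
    by move=> j Hj Hjk; apply/(IH1 Hd1) => //; apply: H1.
  + move=> [k [Hk [H2 H1]]]; exists k; split=> //; split.
      by apply/(IH2 Hd2).
    by move=> j Hj Hjk; apply/(IH1 Hd1) => //; apply: H1.
Qed.

Arguments inv_all {Obs m}.

Theorem mainTheorem10 (Obs : finType) (m : nat) :
  1 < #|Obs| -> 2 <= m -> #|Obs| <= m ->
  exists phi : hform Obs m,
    ~ exists phi' : hform Obs m,
        hdelta_free phi' /\
        forall M : model Obs m, in_classC M -> (msat M phi <-> msat M phi').
Proof.
move=> HO Hm HOm.
have x0 : Obs.
  move: HO; rewrite cardT; case: (enum Obs) => [|x _] //.
pose e := enum Obs.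
have He : size e = #|Obs| by rewrite cardT.
pose oi := fun a : 'I_m => nth x0 e a.
pose o1 := nth x0 e 0; pose o2 := nth x0 e 1.
have H12 : (o2 == o1) = false.
  by rewrite /o1 /o2 nth_uniq ?He ?enum_uniq // (ltn_trans _ HO).
have Hm0 : 0 < m by apply: ltn_trans Hm.
pose a0 := Ordinal Hm0.
have Hsurj : forall o, exists a, oi a = o.
  move=> o; have Hi : index o e < m.
    by apply: leq_trans HOm; rewrite -He index_mem mem_enum.
  by exists (Ordinal Hi); rewrite /oi /= nth_index // mem_enum.
exists (HDelta a0 o2 (HK a0 (HAtom 0))).
case=> phi' [Hd Heq].
have C1 : in_classC (M1 oi o1 o2) by [].
have C2 : in_classC (M2 oi) by [].
have Hinv := inv_all oi o1 o2 _ Hd [:: (false, false)] isT.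
have P1 : msat (M1 oi o1 o2) (HDelta a0 o2 (HK a0 (HAtom 0))).
  rewrite /msat /= => h' Hh' [Hs Hap].
  case: h' Hh' Hs Hap => [|x [|? ?]] //= _ _ Hap.
  have Ha := Hap 0 isT o1; have Hb := Hap 0 isT o2.
  have Hol : ol (M1 oi o1 o2) (rt_add rt_empty a0 o2 0) a0 0 = [:: o1; o2].
    by rewrite /= /obs_at /rt_add eqxx.
  rewrite Hol /= in Ha Hb.
  have {Ha} := Ha (mem_head _ _).
  have {Hb} := Hb ltac:(by rewrite !inE eqxx orbT).
  rewrite /sim1 H12 !eqxx /=.
  by clear Hap; case: x => [[] []].
have P2 : ~ msat (M2 oi) (HDelta a0 o2 (HK a0 (HAtom 0))).
  rewrite /msat /= => H.
  by have := H [:: true] isT (conj erefl (fun _ _ _ _ => erefl)).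
move: (Heq _ C1) (Heq _ C2) Hinv; rewrite /msat /=; tauto.
Qed.
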